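(* Let $\mathcal{X}_V,\mathcal{X}_L$ be finite sets, $\mathcal{P}_M$ a joint distribution on $\mathcal{X}_V\times\mathcal{X}_L$ with everywhere positive marginals $\mathcal{P}_V,\mathcal{P}_L$, and let $\mathcal{P}_M(x_v|x_l)=\mathcal{P}_M(x_v,x_l)/\mathcal{P}_L(x_l)$. Define the text-induced joint distribution on $\mathcal{X}_V\times\mathcal{X}_V$ by $\mathcal{P}_T(x_v,x_v')=\mathbb{E}_{x_l\sim\mathcal{P}_L}\mathcal{P}_M(x_v|x_l)\mathcal{P}_M(x_v'|x_l)$, and the uni-modal contrastive loss for $f_V:\mathcal{X}_V\to\mathbb{R}^k$, $$\mathcal{L}^{\rm uni}_{\rm SCL}(f_V)=-2\,\mathbb{E}_{(x_v,x_v^+)\sim\mathcal{P}_T}f_V(x_v)^\top f_V(x_v^+)+\mathbb{E}_{x_v\sim\mathcal{P}_V,\,x_v^-\sim\mathcal{P}_V}\big(f_V(x_v)^\top f_V(x_v^-)\big)^2$$ with $x_v^-$ independent of $x_v$. Let $f_V^*$ be an optimal visual encoder of the multi-modal loss $$\mathcal{L}_{\rm SCL}(f_V,f_L)=-2\,\mathbb{E}_{(x_v,x_l)\sim\mathcal{P}_M}f_V(x_v)^\top f_L(x_l)+\mathbb{E}_{x_v^-\sim\mathcal{P}_V,\,x_l^-\sim\mathcal{P}_L}\big(f_V(x_v^-)^\top f_L(x_l^-)\big)^2$$ (minimized over all functions $f_V:\mathcal{X}_V\to\mathbb{R}^k$, $f_L:\mathcal{X}_L\to\mathbb{R}^k$),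 of the form $f^*_V(x_v)=\mathcal{P}_V(x_v)^{-1/2}(U^k_{x_v}DR)^\top$ where $U^k$ contains the top-$k$ left singular vectors of $\tilde P_M$, $(\tilde P_M)_{x_v,x_l}=\mathcal{P}_M(x_v,x_l)/\sqrt{\mathcal{P}_V(x_v)\mathcal{P}_L(x_l)}$, $D$ is an invertible diagonal $k\times k$ matrix and $R$ is a $k\times k$ orthogonal matrix. Then $f_V^*$ is equivalent, up to scaling and rotation, to an optimal encoder $f_V'^*$ of $\mathcal{L}^{\rm uni}_{\rm SCL}$, and accordingly their linear probing errors are equal: $\mathcal{E}(f_V^* )=\mathcal{E}(f_V'^* )$.
   Context: Linear probing error of $f:\mathcal{X}_V\to\mathbb{R}^k$ with ground-truth labels $y(x_v)\in\{1,\dots,m\}$: $\mathcal{E}(f)=\min_{B\in\mathbb{R}^{k\times m}}\mathbb{E}_{x_v\sim\mathcal{P}_V}\mathbb{1}[\arg\max_i(f(x_v)^\top B)_i\ne y(x_v)]$. ''Equivalent up to scaling and rotation'' means the embedding matrices with rows $f(x_v)^\top$ (suitably weighted by $\sqrt{\mathcal{P}_V(x_v)}$) differ by right multiplication by an invertible $k\times k$ matrix built from diagonal scalings and orthogonal rotations.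
   Formalization: The dimension k is at most the rank of $\tilde P_M$, so the top-k singular values of $\tilde P_M$ used to build $U^k$ are all positive. The statement above fails without it. *)

(* Defs.v *)
From HB Require Import structures.
From mathcomp Require Import all_boot all_order all_algebra.
From mathcomp Require Import boolp classical_sets reals.
Set Implicit Arguments. Unset Strict Implicit. Unset Printing Implicit Defensive.
Import Order.TTheory GRing.Theory Num.Theory.
Local Open Scope ring_scope.
Local Open Scope classical_set_scope.

(* X_V = 'I_n, X_L = 'I_m; the joint distribution P_M is an n x m matrix. *)
Section Defs.
Variables (R : realType) (n m k : nat).

Definition is_joint_distr (PM : 'M[R]_(n, m)) : Prop :=
  (forall x l, 0 <= PM x l) /\ \sum_x \sum_l PM x l = 1.

Definition PV (PM : 'M[R]_(n, m)) (x : 'I_n) : R := \sum_l PM x l.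
Definition PL (PM : 'M[R]_(n, m)) (l : 'I_m) : R := \sum_x PM x l.

Definition Pcond (PM : 'M[R]_(n, m)) (x : 'I_n) (l : 'I_m) : R :=
  PM x l / PL PM l.

Definition PT (PM : 'M[R]_(n, m)) (x x' : 'I_n) : R :=
  \sum_l PL PM l * (Pcond PM x l * Pcond PM x' l).

Definition dotr (u v : 'rV[R]_k) : R := \sum_i u 0 i * v 0 i.

Definition Luni (PM : 'M[R]_(n, m)) (f : 'I_n -> 'rV[R]_k) : R :=
  - 2 * (\sum_x \sum_x' PT PM x x' * dotr (f x) (f x'))
  + \sum_x \sum_x' PV PM x * PV PM x' * (dotr (f x) (f x')) ^+ 2.

Definition Lscl (PM : 'M[R]_(n, m)) (fV : 'I_n -> 'rV[R]_k)
    (fL : 'I_m -> 'rV[R]_k) : R :=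
  - 2 * (\sum_x \sum_l PM x l * dotr (fV x) (fL l))
  + \sum_x \sum_l PV PM x * PL PM l * (dotr (fV x) (fL l)) ^+ 2.

Definition Ptilde (PM : 'M[R]_(n, m)) : 'M[R]_(n, m) :=
  \matrix_(x, l) (PM x l / Num.sqrt (PV PM x * PL PM l)).

Definition top_k_left_singular (A : 'M[R]_(n, m)) (Uk : 'M[R]_(n, k)) : Prop :=
  (k <= n)%N /\
  exists (U : 'M[R]_n) (V : 'M[R]_m) (s : nat -> R),
    U *m U^T = 1%:M /\ V *m V^T = 1%:M /\
    (forall i, 0 <= s i) /\
    (forall i j : nat, (i <= j)%N -> (j < minn n m)%N -> s j <= s i) /\
    A = U *m (\matrix_(i < n, j < m) (if (i : nat) == j then s i else 0))
          *m V^T /\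
    (forall (x : 'I_n) (j : 'I_k) (j' : 'I_n), (j : nat) = j' -> Uk x j = U x j').

Inductive scale_rot : 'M[R]_k -> Prop :=
| sr_diag (d : 'rV[R]_k) : (forall i, d 0 i != 0) -> scale_rot (diag_mx d)
| sr_orth (Q : 'M[R]_k) : Q *m Q^T = 1%:M -> scale_rot Q
| sr_mul (A B : 'M[R]_k) : scale_rot A -> scale_rot B -> scale_rot (A *m B).

Definition emb (PM : 'M[R]_(n, m)) (f : 'I_n -> 'rV[R]_k) : 'M[R]_(n, k) :=
  \matrix_(x, j) (Num.sqrt (PV PM x) * f x 0 j).

(* linear probing with c.+1 classes; arg max with a fixed tie-breaking rule *)
Definition probe_pred (c : nat) (B : 'M[R]_(k, c.+1)) (v : 'rV[R]_k) : 'I_c.+1 :=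
  [arg max_(i > ord0) (v *m B) 0 i]%O.

Definition probe_err (c : nat) (PM : 'M[R]_(n, m)) (y : 'I_n -> 'I_c.+1)
    (f : 'I_n -> 'rV[R]_k) (B : 'M[R]_(k, c.+1)) : R :=
  \sum_x PV PM x * (probe_pred B (f x) != y x)%:R.

Definition lin_probe_error (c : nat) (PM : 'M[R]_(n, m)) (y : 'I_n -> 'I_c.+1)
    (f : 'I_n -> 'rV[R]_k) : R :=
  inf [set e | exists B : 'M[R]_(k, c.+1), e = probe_err PM y f B].

End Defs.

(* Main.v *)
Require Import Defs.
From HB Require Import structures.
From mathcomp Require Import all_boot all_order all_algebra.
From mathcomp Require Import boolp classical_sets reals.
From mathcomp Require Import ring lra.
Import Order.TTheory GRing.Theory Num.Theory.
Local Open Scope ring_scope.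

Set Implicit Arguments. Unset Strict Implicit.
Section Helpers.
Variable R : realType.

Definition nrm {p q} (X : 'M[R]_(p, q)) : R := \tr (X *m X^T).

Lemma nrmE p q (X : 'M[R]_(p, q)) : nrm X = \sum_i \sum_j X i j ^+ 2.
Proof.
rewrite /nrm /mxtrace; apply: eq_bigr => i _; rewrite !mxE.
by apply: eq_bigr => j _; rewrite !mxE expr2.
Qed.

Lemma nrm_ge0 p q (X : 'M[R]_(p, q)) : 0 <= nrm X.
Proof. by rewrite nrmE; apply: sumr_ge0 => i _; apply: sumr_ge0 => j _; apply: sqr_ge0. Qed.

Lemma nrm_eq0 p q (X : 'M[R]_(p, q)) : nrm X = 0 -> X = 0.
Proof.
rewrite nrmE => H; apply/matrixP => i j; rewrite mxE.
have H1 : \sum_j X i j ^+ 2 = 0.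
  apply: (psumr_eq0P _ H) => // i0 _; apply: sumr_ge0 => j0 _; apply: sqr_ge0.
have := @psumr_eq0P _ _ _ _ (fun j _ => sqr_ge0 (X i j)) H1 j isT.
by move/eqP; rewrite sqrf_eq0 => /eqP.
Qed.

Lemma proj_exists p k (H : 'M[R]_(p, k)) :
  exists Q : 'M[R]_p, Q^T = Q /\ Q *m Q = Q /\ Q *m H = H /\ \tr Q <= k%:R.
Proof.
have [r [B [fB [sub rk]]]] : exists r (B : 'M[R]_(r, p)), row_free B /\ (H^T <= B)%MS /\ (r <= k)%N.
  exists (\rank H^T), (row_base H^T); rewrite row_base_free eq_row_base submx_refl.
  by split => //; split => //; apply: rank_leq_row.
set C := B *m B^T.
have Cu : C \in unitmx.
  rewrite -row_free_unit; apply/inj_row_free => v Hv.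
  have : nrm (v *m B) = 0.
    by rewrite /nrm trmx_mul mulmxA -(mulmxA v) Hv mul0mx /mxtrace big1 // => i _; rewrite mxE.
  move=> /nrm_eq0 /eqP; rewrite mulmx_free_eq0 //; by move/eqP.
have CT : C^T = C by rewrite /C trmx_mul trmxK.
exists (B^T *m invmx C *m B); split; [|split; [|split]].
- by rewrite !trmx_mul trmxK trmx_inv CT mulmxA.
- rewrite -!mulmxA (mulmxA B) -/C (mulmxA C) mulmxV // mul1mx //.
- have HE : H = B^T *m (H^T *m pinvmx B)^T.
    by rewrite -trmx_mul (mulmxKpV sub) trmxK.
  rewrite HE -!mulmxA (mulmxA B) -/C (mulmxA (invmx C)) mulVmx // mul1mx //.
- rewrite -mulmxA mxtrace_mulC -mulmxA -/C mulVmx // mxtrace1 ler_nat.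
  exact: rk.
Qed.

Lemma proj_diag p (Q : 'M[R]_p) i : Q^T = Q -> Q *m Q = Q -> 0 <= Q i i <= 1.
Proof.
move=> QT QQ.
have E : Q i i = \sum_j Q i j ^+ 2.
  rewrite -{1}QQ mxE; apply: eq_bigr => j _.
  by rewrite -{2}QT mxE expr2.
have h0 : 0 <= Q i i by rewrite E; apply: sumr_ge0 => j _; apply: sqr_ge0.
have h1 : Q i i ^+ 2 <= Q i i.
  rewrite [X in _ <= X]E (bigD1 i) //= lerDl; apply: sumr_ge0 => j _; apply: sqr_ge0.
rewrite h0 /=; nra.
Qed.


Lemma nrm_conj p q (U : 'M[R]_(p, q)) (X : 'M[R]_q) :
  U^T *m U = 1%:M -> nrm (U *m X *m U^T) = nrm X.
Proof.
move=> UtU; rewrite /nrm !trmx_mul trmxK -!mulmxA (mulmxA U^T U) UtU mul1mx.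
rewrite mxtrace_mulC -!mulmxA UtU mulmx1 //.
Qed.

Lemma nrm_projE p q (P : 'M[R]_p) (X : 'M[R]_(p, q)) :
  P^T = P -> P *m P = P -> nrm (P *m X) = \tr (X *m X^T *m P).
Proof.
move=> PT PP; rewrite /nrm trmx_mul PT -!mulmxA (mxtrace_mulC P) -!mulmxA PP !mulmxA //.
Qed.

Lemma lower_bound p k (l : 'rV[R]_p) (H : 'M[R]_(p, k)) :
  exists q : 'I_p -> R, (forall i, 0 <= q i <= 1) /\ \sum_i q i <= k%:R /\
    \sum_i l 0 i ^+ 2 * (1 - q i) <= nrm (diag_mx l - H *m H^T).
Proof.
have [Q [QT [QQ [QH trQ]]]] := proj_exists H.
exists (fun i => Q i i); split; [|split].
- by move=> i; apply: proj_diag.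
- exact: trQ.
set X := diag_mx l - H *m H^T.
set P := 1%:M - Q.
have PT : P^T = P by rewrite /P linearB /= trmx1 QT.
have PP : P *m P = P.
  by rewrite /P mulmxBl mul1mx mulmxBr mulmx1 QQ subrr subr0.
have E : nrm X = nrm (Q *m X) + nrm (P *m X).
  rewrite nrm_projE // nrm_projE // -mxtraceD -mulmxDr /P addrC subrK mulmx1 //.
have PX : P *m X = P *m diag_mx l.
  rewrite /X mulmxBr mulmxA.
  have -> : P *m H = 0 by rewrite /P mulmxBl mul1mx QH subrr.
  by rewrite mul0mx subr0.
have -> : \sum_i l 0 i ^+ 2 * (1 - Q i i) = nrm (P *m X).
  rewrite PX nrm_projE // tr_diag_mx mulmx_diag mul_diag_mx /mxtrace.
  apply: eq_bigr => i _; rewrite !mxE eqxx /= mulr1n expr2 //.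
by rewrite E lerDr nrm_ge0.
Qed.

Lemma rearr p k (mu q : 'I_p -> R) (t : R) : (k <= p)%N -> 0 <= t ->
  (forall i : 'I_p, (i < k)%N -> t <= mu i) ->
  (forall i : 'I_p, (k <= i)%N -> mu i <= t) ->
  (forall i : 'I_p, 0 <= q i <= 1) -> \sum_i q i <= k%:R ->
  \sum_(i : 'I_p) (if (k <= i)%N then mu i else 0) <= \sum_(i : 'I_p) mu i * (1 - q i).
Proof.
move=> kp t0 Hlt Hge q01 sq.
have cnt : \sum_(i < p) (if (i < k)%N then 1 else 0) = k%:R :> R.
  rewrite -(big_mkord xpredT (fun i : nat => (if (i < k)%N then 1 else 0 : R))).
  rewrite (@big_cat_nat _ _ _ k 0 p) //=.
  rewrite (eq_big_nat _ _ (F2 := fun _ => 1)); last by move=> i /andP[_ ->].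
  rewrite [X in _ + X](eq_big_nat _ _ (F2 := fun _ => 0)); last first.
    by move=> i /andP[ki _]; rewrite ltnNge ki.
  by rewrite sumr_const_nat big1 // addr0 subn0.
rewrite -subr_ge0 -sumrB.
have step : \sum_(i : 'I_p) t * ((if (i < k)%N then 1 else 0) - q i) <=
   \sum_(i : 'I_p) (mu i * (1 - q i) - (if (k <= i)%N then mu i else 0)).
  apply: ler_sum => i _; have := q01 i; case: (ltnP i k) => ik /andP[q0 q1].
  + have := Hlt i ik; nra.
  + have := Hge i ik; nra.
apply: le_trans step; rewrite -mulr_sumr sumrB cnt.
by apply: mulr_ge0 => //; rewrite subr_ge0.
Qed.

End Helpers.

Unset Implicit Arguments. Set Strict Implicit.

Lemma sq_mono (R : realType) (a b : R) : 0 <= a -> a <= b -> a ^+ 2 <= b ^+ 2.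
Proof. move=> ha hab; rewrite !expr2; nra. Qed.

Theorem theorem4p1 (R : realType) (n m k c : nat) (PM : 'M[R]_(n, m))
  (y : 'I_n -> 'I_c.+1)
  (fV : 'I_n -> 'rV[R]_k) (Uk : 'M[R]_(n, k)) (d : 'rV[R]_k) (Rm : 'M[R]_k) :
  is_joint_distr PM ->
  (forall x, 0 < PV PM x) ->
  (forall l, 0 < PL PM l) ->
  (k <= \rank (Ptilde PM))%N ->
  (exists fL : 'I_m -> 'rV[R]_k,
     forall (gV : 'I_n -> 'rV[R]_k) (gL : 'I_m -> 'rV[R]_k),
       Lscl PM fV fL <= Lscl PM gV gL) ->
  top_k_left_singular (Ptilde PM) Uk ->
  (forall i, d 0 i != 0) ->
  Rm *m Rm^T = 1%:M ->
  (forall x, fV x = (Num.sqrt (PV PM x))^-1 *: (row x Uk *m diag_mx d *m Rm)) ->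
  exists fV' : 'I_n -> 'rV[R]_k,
    (forall g : 'I_n -> 'rV[R]_k, Luni PM fV' <= Luni PM g) /\
    (exists M : 'M[R]_k, scale_rot M /\ emb PM fV = emb PM fV' *m M) /\
    lin_probe_error PM y fV = lin_probe_error PM y fV'.
Proof.
move=> [PM0 PM1] PVpos PLpos krank _ [kn [U [V [s [UU [VV [s0 [smono [Adec Ukdef]]]]]]]]] d0 RR fVdef.
set A := Ptilde PM in krank Adec.
set S := \matrix_(i < n, j < m) (if (i : nat) == j then s i else 0) in Adec.
have UtU : U^T *m U = 1%:M := mulmx1C UU.
have VtV : V^T *m V = 1%:M := mulmx1C VV.
have km : (k <= m)%N := leq_trans krank (rank_leq_col A).
have sqPV : forall x, Num.sqrt (PV PM x) != 0.
  by move=> x; rewrite gt_eqF // sqrtr_gt0.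
set lam := \row_i (S *m S^T) i i.
have SS : S *m S^T = diag_mx lam.
  apply/matrixP => i i'; rewrite [RHS]mxE [lam 0 i]mxE.
  case: (eqVneq i i') => [<-|ne]; first by rewrite mulr1n.
  rewrite mulr0n !mxE; apply: big1 => l _; rewrite !mxE.
  case: eqP => [il|_]; last by rewrite mul0r.
  case: eqP => [i'l|_]; last by rewrite mulr0.
  by move: ne; rewrite -val_eqE /= il i'l eqxx.
have lamE : forall i : 'I_n, lam 0 i = if (i < m)%N then s i ^+ 2 else 0.
  move=> i; rewrite /lam /S !mxE; case: ltnP => im.
  - rewrite (bigD1 (Ordinal im)) //= big1 ?addr0.
      by rewrite !mxE /= eqxx expr2.
    move=> l nl; rewrite !mxE; case: eqP => [il|]; last by rewrite mul0r.
    exfalso; move: nl; rewrite (_ : l = Ordinal im) ?eqxx //; by apply: val_inj; rewrite /= il.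
  - apply: big1 => l _; rewrite !mxE; case: eqP => [il|]; last by rewrite mul0r.
    by exfalso; have := ltn_ord l; rewrite -il ltnNge im.
clearbody lam.
set T := \matrix_(x, x') (PT PM x x' / (Num.sqrt (PV PM x) * Num.sqrt (PV PM x'))).
have TA : T = A *m A^T.
  apply/matrixP => x x'; rewrite !mxE /PT mulr_suml; apply: eq_bigr => l _.
  rewrite !mxE /Pcond.
  rewrite sqrtrM ?(ltW (PVpos x)) // sqrtrM ?(ltW (PVpos x')) //.
  have hl : Num.sqrt (PL PM l) != 0 by rewrite gt_eqF // sqrtr_gt0.
  have ha := sqPV x; have hb := sqPV x'.
  set a := Num.sqrt (PV PM x) in ha *. set b := Num.sqrt (PV PM x') in hb *.
  set cc := Num.sqrt (PL PM l) in hl *.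
  have hc2 : PL PM l = cc ^+ 2 by rewrite /cc sqr_sqrtr // ltW.
  rewrite hc2; field.
  by rewrite ha hb hl.
have TU : T = U *m diag_mx lam *m U^T.
  rewrite TA Adec !trmx_mul trmxK -!mulmxA (mulmxA V^T V) VtV mul1mx -SS !mulmxA //.

have LuniE : forall g : 'I_n -> 'rV[R]_k, Luni PM g = nrm (T - emb PM g *m (emb PM g)^T) - nrm T.
  move=> g; rewrite /Luni !nrmE -sumrB mulr_sumr -big_split /=; apply: eq_bigr => x _.
  rewrite -sumrB mulr_sumr -big_split /=; apply: eq_bigr => x' _.
  set W := emb PM g *m (emb PM g)^T.
  have WE : W x x' = Num.sqrt (PV PM x) * Num.sqrt (PV PM x') * dotr (g x) (g x').
    rewrite /W !mxE /dotr mulr_sumr; apply: eq_bigr => j _; rewrite !mxE; ring.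
  rewrite mxE [(- W) x x']mxE WE /T mxE.
  have ha := sqPV x; have hb := sqPV x'.
  have ea : PV PM x = Num.sqrt (PV PM x) ^+ 2 by rewrite sqr_sqrtr // ltW.
  have eb : PV PM x' = Num.sqrt (PV PM x') ^+ 2 by rewrite sqr_sqrtr // ltW.
  set a := Num.sqrt (PV PM x) in ha ea *. set b := Num.sqrt (PV PM x') in hb eb *.
  set dt := dotr (g x) (g x').
  rewrite ea eb; field.
  by rewrite ha hb.
have convT : forall G : 'M[R]_(n, k),
    T - G *m G^T = U *m (diag_mx lam - (U^T *m G) *m (U^T *m G)^T) *m U^T.
  move=> G; rewrite mulmxBr mulmxBl TU; congr (_ - _).
  rewrite trmx_mul trmxK !mulmxA UU mul1mx -!mulmxA UU mulmx1 //.
have [t [t0 [Hlt Hge]]] : exists t, 0 <= t /\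
    (forall i : 'I_n, (i < k)%N -> t <= lam 0 i ^+ 2) /\
    (forall i : 'I_n, (k <= i)%N -> lam 0 i ^+ 2 <= t).
  case: (posnP k) => [k0|kpos].
  - exists (\sum_i lam 0 i ^+ 2); split; [|split].
    + by apply: sumr_ge0 => i _; apply: sqr_ge0.
    + by move=> i; rewrite k0.
    + move=> i _; rewrite (bigD1 i) //= lerDl; apply: sumr_ge0 => j _; apply: sqr_ge0.
  - have kkm : (k.-1 < minn n m)%N.
      by rewrite leq_min !prednK // kn km.
    have hk := s0 k.-1.
    exists ((s k.-1 ^+ 2) ^+ 2); split; [|split].
    + exact: sqr_ge0.
    + move=> i ik; rewrite lamE (leq_trans ik km).
      apply: sq_mono; first exact: sqr_ge0.
      apply: sq_mono => //; apply: smono => //; by rewrite -ltnS prednK.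
    + move=> i ki; rewrite lamE; case: ltnP => im; last first.
        by rewrite expr0n /=; apply: sqr_ge0.
      apply: sq_mono; first exact: sqr_ge0.
      apply: sq_mono => //; apply: smono.
        by apply: leq_trans ki; apply: leq_pred.
      by rewrite leq_min ltn_ord im.
have low : forall G : 'M[R]_(n, k),
    \sum_(i : 'I_n) (if (k <= i)%N then lam 0 i ^+ 2 else 0) <= nrm (T - G *m G^T).
  move=> G; rewrite convT nrm_conj //.
  have [q [q01 [sq H]]] := lower_bound lam (U^T *m G).
  apply: le_trans H.
  exact: (rearr (mu := fun i => lam 0 i ^+ 2) kn t0 Hlt Hge q01 sq).

have spos : forall j : nat, (j < k)%N -> s j != 0.
  move=> j jk; apply/negP => /eqP sj0.
  have jn : (j <= n)%N := ltnW (leq_trans jk kn).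
  have PS : S = pid_mx j *m S.
    apply/matrixP => i l; rewrite [RHS]mxE (bigD1 i) //= big1 ?addr0; last first.
      move=> i' ne; rewrite !mxE.
      rewrite (_ : (i == i' :> nat) = false) ?mul0r //.
      by apply/negbTE; rewrite eq_sym.
    rewrite [pid_mx j i i]mxE eqxx /=; case: ltnP => ij; first by rewrite mul1r.
    rewrite mul0r /S mxE; case: eqP => // il.
    have im : (i < m)%N by rewrite il.
    apply/eqP; rewrite eq_le s0 andbT -sj0; apply: smono => //.
    by rewrite leq_min ltn_ord im.
  have : (\rank A <= j)%N.
    rewrite Adec PS.
    apply: leq_trans (mxrankM_maxl _ _) _.
    apply: leq_trans (mxrankM_maxr _ _) _.
    apply: leq_trans (mxrankM_maxl _ _) _.
    by rewrite rank_pid_mx.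
  by move=> /(leq_trans krank); rewrite leqNgt jk.
set sk := \row_(j < k) s j.
pose fV' := fun x => (Num.sqrt (PV PM x))^-1 *: (row x Uk *m diag_mx sk).
have embV' : emb PM fV' = Uk *m diag_mx sk.
  apply/matrixP => x j; rewrite /emb mxE /fV' /= !mul_mx_diag !mxE.
  by rewrite mulrA mulfV ?mul1r.
set Emat := \matrix_(i < n, j < k) (((i : nat) == j)%:R : R).
have UkE : Uk = U *m Emat.
  apply/matrixP => x j; rewrite !mxE (bigD1 (widen_ord kn j)) //= big1 ?addr0.
    by rewrite !mxE /= eqxx mulr1; apply: Ukdef.
  move=> i ne; rewrite !mxE.
  rewrite (_ : (i == j :> nat) = false) ?mulr0 //.
  by apply/negbTE; apply: contra ne => /eqP h; apply/eqP/val_inj.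
have Dstar : diag_mx lam - (U^T *m emb PM fV') *m (U^T *m emb PM fV')^T =
    diag_mx (\row_i (if (k <= i)%N then lam 0 i else 0)).
  rewrite embV' UkE !mulmxA UtU mul1mx mul_mx_diag.
  apply/matrixP => i i'; rewrite !mxE.
  under eq_bigr => j _ do rewrite !mxE.
  case: (ltnP i k) => ik.
  - rewrite (bigD1 (Ordinal ik)) //= big1 ?addr0; last first.
      move=> j ne.
      rewrite (_ : (i == j :> nat) = false) ?mul0r //.
      apply/negbTE/eqP => h; move: ne; rewrite (_ : j = Ordinal ik) ?eqxx //.
      by apply: val_inj; rewrite /= h.
    rewrite eqxx mul1r.
    case: (eqVneq i i') => [<-|ne].
      by rewrite eqxx mul1r mulr1n lamE (leq_trans ik km) expr2 subrr.
    rewrite (_ : (i' == i :> nat) = false) ?mul0r ?mulr0 ?mulr0n ?subr0 //.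
    by apply/negbTE; rewrite eq_sym.
  - rewrite big1 ?subr0 //.
    move=> j _.
    rewrite (_ : (i == j :> nat) = false) ?mul0r //.
    by apply/negbTE; rewrite neq_ltn (leq_trans (ltn_ord j) ik) orbT.
have nrmStar : nrm (T - emb PM fV' *m (emb PM fV')^T) =
    \sum_(i : 'I_n) (if (k <= i)%N then lam 0 i ^+ 2 else 0).
  rewrite convT nrm_conj // Dstar /nrm tr_diag_mx mulmx_diag mxtrace_diag.
  by apply: eq_bigr => i _; rewrite !mxE; case: ifP => _; rewrite ?expr2 ?mul0r.

have skE : forall j : 'I_k, sk 0 j = s j by move=> j; rewrite mxE.
have skn : forall j : 'I_k, sk 0 j != 0 by move=> j; rewrite skE spos.
set M := diag_mx (\row_j (d 0 j / sk 0 j)) *m Rm.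
set Minv := Rm^T *m diag_mx (\row_j (sk 0 j / d 0 j)).
have MMi : M *m Minv = 1%:M.
  rewrite /M /Minv -mulmxA (mulmxA Rm) RR mul1mx mulmx_diag.
  rewrite -diag_const_mx; congr diag_mx; apply/rowP => j; rewrite !mxE.
  by field; rewrite ?skE ?spos ?d0.
have fVM : forall x, fV x = fV' x *m M.
  move=> x; rewrite fVdef /fV' /M -scalemxAl !mulmxA -(mulmxA _ (diag_mx sk)) mulmx_diag.
  congr (_ *: (_ *m diag_mx _ *m _)); apply/rowP => j; rewrite !mxE.
  by field; rewrite ?skE ?spos ?d0.
exists fV'; split; [|split].
  by move=> g; rewrite !LuniE lerD2r nrmStar low.
  exists M; split.
    apply: sr_mul; last exact: sr_orth.
    by apply: sr_diag => j; rewrite mxE mulf_neq0 ?invr_neq0 ?skE ?spos ?d0.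
  apply/matrixP => x j; rewrite !mxE fVM mxE mulr_sumr; apply: eq_bigr => i _.
  by rewrite [emb PM fV' x i]mxE mulrA.
have pe : forall B, probe_err PM y fV B = probe_err PM y fV' (M *m B).
  move=> B; rewrite /probe_err; apply: eq_bigr => x _.
  by rewrite /probe_pred fVM -mulmxA.
rewrite /lin_probe_error; congr inf; apply/seteqP; split => e [B ->].
  by exists (M *m B); rewrite pe.
by exists (Minv *m B); rewrite pe mulmxA MMi mul1mx.
Qed.
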